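(* Let $\mathcal{E}$ be a multiclass tree ensemble with classes $\{0,\dots,C-1\}$, $F\subseteq\mathcal{F}$ a set of sensitive features, $c^{(1)},c^{(2)}$ classes, and $g>0$ with $\eta=\ln g$. The set of feasible solutions of the MILP consisting of constraints (C1)–(C5) below together with (Gap-multi) equals the set of feasible solutions of the MILP obtained by additionally imposing (Aff-multi) $\sum_{n\in\mathcal{L}_{c^{(1)}}\setminus\mathcal{U}}\left(l^{(1)}_n\,n.val-l^{(2)}_n\,n.val\right)+\sum_{n\in\mathcal{L}_{c^{(2)}}\setminus\mathcal{U}}\left(l^{(2)}_n\,n.val-l^{(1)}_n\,n.val\right)>2\eta$.
   Context: A decision tree is either a leaf $n$ with real value $n.val$ or an internal node with guard $X_f<\tau$ and children $n.yes$ (taken when $x_f<\tau$) and $n.no$. A multiclass tree ensemble has its trees partitioned into sets $\mathcal{T}_0,\dots,\mathcal{T}_{C-1}$, one per class; $\mathcal{L}_c$ denotes the set of leaves of trees in $\mathcal{T}_c$, and $\mathcal{A}$ the set of all leaves. For each feature $f$, $\tau_{f1}<\dots<\tau_{fK_f}$ are the distinct thresholds of guards on $f$. For an internal node $n$, $TSet(n)$ and $FSet(n)$ are the leaves of the subtrees rooted at $n.yes$ and $n.no$. Variables: for $c\in\{1,2\}$, binary $p^{(c)}_{fk}\in\{0,1\}$ for each feature $f$ and $k\le K_f$, and continuous $0\le l^{(c)}_n\le1$ for each leaf $n$. (C1) $p^{(c)}_{f1}\le\dots\le p^{(c)}_{fK_f}$ for each $f$; (C2) for each tree, the sum of $l^{(c)}_n$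 over its leaves is $1$; (C3) for each root node with guard $X_f<\tau_{fk}$: $1-\sum_{n\in FSet}l^{(c)}_n=p^{(c)}_{fk}=\sum_{n\in TSet}l^{(c)}_n$; (C4) for each non-root internal node with guard $X_f<\tau_{fk}$: $1-\sum_{n\in FSet}l^{(c)}_n\ge p^{(c)}_{fk}\ge\sum_{n\in TSet}l^{(c)}_n$; (C5) $p^{(1)}_{fk}=p^{(2)}_{fk}$ for all $f\notin F$ and all $k$; (Gap-multi) for every class $c\ne c^{(1)}$: $\sum_{n\in\mathcal{L}_{c^{(1)}}}l^{(1)}_n\,n.val>\sum_{n\in\mathcal{L}_c}l^{(1)}_n\,n.val+\eta$, and for every class $c\ne c^{(2)}$: $\sum_{n\in\mathcal{L}_{c^{(2)}}}l^{(2)}_n\,n.val>\sum_{n\in\mathcal{L}_c}l^{(2)}_n\,n.val+\eta$. A leaf is unaffected if no guard on the path from its tree's root to it involves a feature of $F$; $\mathcal{U}$ is the set of unaffected leaves. *)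

(* Defs.v *)
From Stdlib Require Import Reals List.
Import ListNotations.
Open Scope R_scope.

(* A decision tree: a leaf with real value, or an internal node with guard
   X_f < tau (feature index f, threshold tau), children yes (taken when
   x_f < tau) and no. *)
Inductive tree : Type :=
| Leaf (val : R)
| Node (f : nat) (tau : R) (yes no : tree).

(* A leaf of a tree is identified by its path from the root
   (true = yes-branch, false = no-branch).  [leaves t] lists, for every leaf,
   (path, value, features of the guards on the path from the root). *)
Fixpoint leaves (t : tree) : list (list bool * R * list nat) :=
  match t with
  | Leaf v => [([], v, [])]
  | Node f _ y n =>
      map (fun '(p, v, fs) => (true :: p, v, f :: fs)) (leaves y) ++
      map (fun '(p, v, fs) => (false :: p, v, f :: fs)) (leaves n)
  end.

Fixpoint inodes (t : tree) : list (list bool * nat * R * tree * tree) :=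
  match t with
  | Leaf _ => []
  | Node f tau y n =>
      ([], f, tau, y, n) ::
      map (fun '(p, g, s, a, b) => (true :: p, g, s, a, b)) (inodes y) ++
      map (fun '(p, g, s, a, b) => (false :: p, g, s, a, b)) (inodes n)
  end.

Definition Rsum (l : list R) : R := fold_right Rplus 0 l.

(* A multiclass ensemble: a list of (class label, tree); the tree with
   position i in the list has index i.  T_c = trees labelled c. *)
Definition ensemble := list (nat * tree).

Definition indexed (E : ensemble) : list (nat * (nat * tree)) :=
  combine (seq 0 (length E)) E.

Definition is_threshold (E : ensemble) (f : nat) (tau : R) : Prop :=
  exists c t p y n, In (c, t) E /\ In (p, f, tau, y, n) (inodes t).

(* Leaf variables l_n: indexed by (tree index, path). *)
Definition leafvar := nat -> list bool -> R.
(* Binary variables p_{fk}: indexed by feature f and threshold tau_{fk}. *)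
Definition splitvar := nat -> R -> bool.

Definition b2R (b : bool) : R := if b then 1 else 0.

Definition sub_sum (l : leafvar) (i : nat) (p : list bool) (s : tree) : R :=
  Rsum (map (fun '(q, _, _) => l i (p ++ q)) (leaves s)).

Definition C1 (E : ensemble) (pv : splitvar) : Prop :=
  forall f tau tau', is_threshold E f tau -> is_threshold E f tau' ->
    tau < tau' -> (pv f tau = true -> pv f tau' = true).

Definition Cbounds (E : ensemble) (l : leafvar) : Prop :=
  forall i c t, In (i, (c, t)) (indexed E) ->
    forall p v fs, In (p, v, fs) (leaves t) -> 0 <= l i p <= 1.

Definition C2 (E : ensemble) (l : leafvar) : Prop :=
  forall i c t, In (i, (c, t)) (indexed E) ->
    Rsum (map (fun '(p, _, _) => l i p) (leaves t)) = 1.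

Definition C34 (E : ensemble) (pv : splitvar) (l : leafvar) : Prop :=
  forall i c t, In (i, (c, t)) (indexed E) ->
    forall p f tau y n, In (p, f, tau, y, n) (inodes t) ->
      let T := sub_sum l i (p ++ [true]) y in
      let Fs := sub_sum l i (p ++ [false]) n in
      match p with
      | [] => 1 - Fs = b2R (pv f tau) /\ b2R (pv f tau) = T
      | _ :: _ => 1 - Fs >= b2R (pv f tau) /\ b2R (pv f tau) >= T
      end.

Definition C5 (E : ensemble) (F : nat -> Prop) (p1 p2 : splitvar) : Prop :=
  forall f tau, ~ F f -> is_threshold E f tau -> p1 f tau = p2 f tau.

Definition class_sum (E : ensemble) (c : nat)
    (keep : list nat -> Prop) (w : nat -> list bool -> R)
    (keepb : forall fs, {keep fs} + {~ keep fs}) : R :=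
  Rsum (map (fun '(i, (c', t)) =>
    if Nat.eqb c' c then
      Rsum (map (fun '(p, v, fs) => if keepb fs then w i p * v else 0) (leaves t))
    else 0) (indexed E)).

Definition all_leaves (fs : list nat) : Prop := True.
Definition all_leaves_dec (fs : list nat) : {all_leaves fs} + {~ all_leaves fs} :=
  left I.

(* A leaf is unaffected iff no guard on its root path involves a feature of F;
   [affected F fs] holds for leaves NOT in U. *)
Definition affected (F : nat -> Prop) (fs : list nat) : Prop :=
  exists f, In f fs /\ F f.

Definition score (E : ensemble) (c : nat) (l : leafvar) : R :=
  class_sum E c all_leaves l all_leaves_dec.

Definition Gap (E : ensemble) (C : nat) (c1 c2 : nat) (eta : R)
    (l1 l2 : leafvar) : Prop :=
  (forall c, (c < C)%nat -> c <> c1 -> score E c1 l1 > score E c l1 + eta) /\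
  (forall c, (c < C)%nat -> c <> c2 -> score E c2 l2 > score E c l2 + eta).

Definition Aff (E : ensemble) (F : nat -> Prop)
    (Fdec : forall fs, {affected F fs} + {~ affected F fs})
    (c1 c2 : nat) (eta : R) (l1 l2 : leafvar) : Prop :=
  class_sum E c1 (affected F) (fun i p => l1 i p - l2 i p) Fdec +
  class_sum E c2 (affected F) (fun i p => l2 i p - l1 i p) Fdec > 2 * eta.

Definition base_constraints (E : ensemble) (F : nat -> Prop)
    (p1 p2 : splitvar) (l1 l2 : leafvar) : Prop :=
  C1 E p1 /\ C1 E p2 /\ Cbounds E l1 /\ Cbounds E l2 /\
  C2 E l1 /\ C2 E l2 /\ C34 E p1 l1 /\ C34 E p2 l2 /\ C5 E F p1 p2.

(* Main.v *)
Require Import Defs.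
From Stdlib Require Import Reals List Lra.
Import ListNotations.
Open Scope R_scope.

Lemma Rsum_app a b : Rsum (a ++ b) = Rsum a + Rsum b.
Proof. induction a; simpl; [ring | rewrite IHa; ring]. Qed.

Lemma Rsum_ext_in {A} (f g : A -> R) l :
  (forall x, In x l -> f x = g x) -> Rsum (map f l) = Rsum (map g l).
Proof. intros H; rewrite (map_ext_in f g l H); reflexivity. Qed.

Lemma Rsum_map_sub {A} (f g : A -> R) l :
  Rsum (map (fun x => f x - g x) l) = Rsum (map f l) - Rsum (map g l).
Proof. induction l; simpl; [ring | rewrite IHl; ring]. Qed.

Lemma Rsum_nonneg {A} (f : A -> R) l :
  (forall x, In x l -> 0 <= f x) -> 0 <= Rsum (map f l).
Proof.
  induction l; simpl; intros H; [lra|].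
  assert (0 <= f a) by (apply H; auto).
  assert (0 <= Rsum (map f l)) by (apply IHl; auto). lra.
Qed.

Fixpoint pathval (pv : splitvar) (s : tree) (q : list bool) : R :=
  match s, q with
  | Leaf _, _ => 1
  | Node f tau y n, true :: q' => b2R (pv f tau) * pathval pv y q'
  | Node f tau y n, false :: q' => (1 - b2R (pv f tau)) * pathval pv n q'
  | Node _ _ _ _, [] => 0
  end.

Lemma b2R_01 b : b2R b = 0 \/ b2R b = 1.
Proof. destruct b; simpl; auto. Qed.

Lemma key (pv : splitvar) : forall s (m : list bool -> R) (r : R),
  (r = 0 \/ r = 1) ->
  (forall q v fs, In (q, v, fs) (leaves s) -> 0 <= m q) ->
  (forall q f tau y n, In (q, f, tau, y, n) (inodes s) ->
     1 - Rsum (map (fun '(q', _, _) => m ((q ++ [false]) ++ q')) (leaves n))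
       >= b2R (pv f tau) /\
     b2R (pv f tau) >=
       Rsum (map (fun '(q', _, _) => m ((q ++ [true]) ++ q')) (leaves y))) ->
  Rsum (map (fun '(q, _, _) => m q) (leaves s)) = r ->
  forall q v fs, In (q, v, fs) (leaves s) -> m q = r * pathval pv s q.
Proof.
  induction s as [v0 | f tau y IHy n IHn]; intros m r Hr Hnn Hin Hsum q v fs Hq.
  - simpl in Hq. destruct Hq as [Hq | []]. inversion Hq; subst q v fs.
    simpl in Hsum. simpl. lra.
  - simpl in Hsum. rewrite map_app, Rsum_app, !map_map in Hsum.
    set (Sy := Rsum (map (fun '(q', _, _) => m (true :: q')) (leaves y))).
    set (Sn := Rsum (map (fun '(q', _, _) => m (false :: q')) (leaves n))).
    assert (ESy : Rsum (map (fun x => (fun '(p, v, fs) => m p)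
        (let '(p, v, fs) := x in (true :: p, v, f :: fs))) (leaves y)) = Sy).
    { unfold Sy. apply Rsum_ext_in. intros [[a b] c] _. reflexivity. }
    assert (ESn : Rsum (map (fun x => (fun '(p, v, fs) => m p)
        (let '(p, v, fs) := x in (false :: p, v, f :: fs))) (leaves n)) = Sn).
    { unfold Sn. apply Rsum_ext_in. intros [[a b] c] _. reflexivity. }
    rewrite ESy, ESn in Hsum.
    assert (Hy0 : 0 <= Sy).
    { unfold Sy. apply Rsum_nonneg. intros [[a b] c] H. apply (Hnn _ b (f :: c)).
      simpl. apply in_or_app. left. apply (in_map (fun '(p, v, fs) => (true :: p, v, f :: fs)) _ _ H). }
    assert (Hn0 : 0 <= Sn).
    { unfold Sn. apply Rsum_nonneg. intros [[a b] c] H. apply (Hnn _ b (f :: c)).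
      simpl. apply in_or_app. right. apply (in_map (fun '(p, v, fs) => (false :: p, v, f :: fs)) _ _ H). }
    assert (Hroot := Hin [] f tau y n (or_introl eq_refl)). simpl in Hroot.
    fold Sy Sn in Hroot.
    destruct (b2R_01 (pv f tau)) as [Hb | Hb]; rewrite Hb in Hroot.
    + assert (Sy = 0) by lra. assert (Sn = r) by lra.
      simpl in Hq. apply in_app_or in Hq. destruct Hq as [Hq | Hq];
        apply in_map_iff in Hq; destruct Hq as [[[q' v'] fs'] [Heq Hq']];
        inversion Heq; subst q v fs; simpl; rewrite Hb.
      * rewrite (IHy (fun q => m (true :: q)) 0 (or_introl eq_refl)) with (v := v') (fs := fs'); [ring| | | |exact Hq'].
        -- intros a b c HH. apply (Hnn _ b (f :: c)). simpl. apply in_or_app. left.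
           apply (in_map (fun '(p, v, fs) => (true :: p, v, f :: fs)) _ _ HH).
        -- intros a f' t' y' n' HH. apply (Hin (true :: a)). simpl. right. apply in_or_app. left.
           apply (in_map (fun '(p, g, s, a, b) => (true :: p, g, s, a, b)) _ _ HH).
        -- fold Sy. lra.
      * rewrite (IHn (fun q => m (false :: q)) r Hr) with (v := v') (fs := fs'); [ring| | | |exact Hq'].
        -- intros a b c HH. apply (Hnn _ b (f :: c)). simpl. apply in_or_app. right.
           apply (in_map (fun '(p, v, fs) => (false :: p, v, f :: fs)) _ _ HH).
        -- intros a f' t' y' n' HH. apply (Hin (false :: a)). simpl. right. apply in_or_app. right.
           apply (in_map (fun '(p, g, s, a, b) => (false :: p, g, s, a, b)) _ _ HH).
        -- fold Sn. lra.
    + assert (Sy = r) by (destruct Hr; lra). assert (Sn = 0) by lra.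
      simpl in Hq. apply in_app_or in Hq. destruct Hq as [Hq | Hq];
        apply in_map_iff in Hq; destruct Hq as [[[q' v'] fs'] [Heq Hq']];
        inversion Heq; subst q v fs; simpl; rewrite Hb.
      * rewrite (IHy (fun q => m (true :: q)) r Hr) with (v := v') (fs := fs'); [ring| | | |exact Hq'].
        -- intros a b c HH. apply (Hnn _ b (f :: c)). simpl. apply in_or_app. left.
           apply (in_map (fun '(p, v, fs) => (true :: p, v, f :: fs)) _ _ HH).
        -- intros a f' t' y' n' HH. apply (Hin (true :: a)). simpl. right. apply in_or_app. left.
           apply (in_map (fun '(p, g, s, a, b) => (true :: p, g, s, a, b)) _ _ HH).
        -- fold Sy. lra.
      * rewrite (IHn (fun q => m (false :: q)) 0 (or_introl eq_refl)) with (v := v') (fs := fs'); [ring| | | |exact Hq'].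
        -- intros a b c HH. apply (Hnn _ b (f :: c)). simpl. apply in_or_app. right.
           apply (in_map (fun '(p, v, fs) => (false :: p, v, f :: fs)) _ _ HH).
        -- intros a f' t' y' n' HH. apply (Hin (false :: a)). simpl. right. apply in_or_app. right.
           apply (in_map (fun '(p, g, s, a, b) => (false :: p, g, s, a, b)) _ _ HH).
        -- fold Sn. lra.
Qed.

Lemma path_eq (pv1 pv2 : splitvar) : forall s q v fs,
  In (q, v, fs) (leaves s) ->
  (forall f tau, In f fs -> (exists p y n, In (p, f, tau, y, n) (inodes s)) ->
     pv1 f tau = pv2 f tau) ->
  pathval pv1 s q = pathval pv2 s q.
Proof.
  induction s as [v0 | f tau y IHy n IHn]; intros q v fs Hq Hf.
  - reflexivity.
  - simpl in Hq. apply in_app_or in Hq. destruct Hq as [Hq | Hq];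
      apply in_map_iff in Hq; destruct Hq as [[[q' v'] fs'] [Heq Hq']];
      inversion Heq; subst q v fs; simpl;
      rewrite (Hf f tau (or_introl eq_refl)) by (exists [], y, n; simpl; auto).
    + f_equal. apply (IHy _ _ _ Hq'). intros g t' Hg [p [y' [n' Hp]]].
      apply Hf; [simpl; auto|]. exists (true :: p), y', n'. simpl. right.
      apply in_or_app. left.
      apply (in_map (fun '(p, g, s, a, b) => (true :: p, g, s, a, b)) _ _ Hp).
    + f_equal. apply (IHn _ _ _ Hq'). intros g t' Hg [p [y' [n' Hp]]].
      apply Hf; [simpl; auto|]. exists (false :: p), y', n'. simpl. right.
      apply in_or_app. right.
      apply (in_map (fun '(p, g, s, a, b) => (false :: p, g, s, a, b)) _ _ Hp).
Qed.

Lemma leaf_val E (pv : splitvar) (l : leafvar) :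
  Cbounds E l -> C2 E l -> C34 E pv l ->
  forall i c t, In (i, (c, t)) (indexed E) ->
  forall q v fs, In (q, v, fs) (leaves t) -> l i q = pathval pv t q.
Proof.
  intros Hb H2 H34 i c t Hi q v fs Hq.
  rewrite (key pv t (l i) 1 (or_intror eq_refl)) with (v := v) (fs := fs); [ring| | | |exact Hq].
  - intros a b d Ha. exact (proj1 (Hb i c t Hi a b d Ha)).
  - intros p f tau y n Hp. specialize (H34 i c t Hi p f tau y n Hp). simpl in H34.
    unfold sub_sum in H34. destruct p; lra.
  - exact (H2 i c t Hi).
Qed.

Lemma cs_diff E F Fdec c (l1 l2 : leafvar) :
  (forall i c' t, In (i, (c', t)) (indexed E) -> forall q v fs,
     In (q, v, fs) (leaves t) -> ~ affected F fs -> l1 i q = l2 i q) ->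
  class_sum E c (affected F) (fun i p => l1 i p - l2 i p) Fdec =
  score E c l1 - score E c l2.
Proof.
  intros H. unfold score, class_sum. rewrite <- Rsum_map_sub.
  apply Rsum_ext_in. intros [i [c' t]] Hi.
  destruct (Nat.eqb c' c); [|ring].
  rewrite <- Rsum_map_sub. apply Rsum_ext_in. intros [[q v] fs] Hq.
  simpl. destruct (Fdec fs) as [Ha | Ha]; [ring|].
  rewrite (H i c' t Hi q v fs Hq Ha). ring.
Qed.

Theorem theorem4 (C : nat) (E : ensemble)
    (HE : Forall (fun ct => (fst ct < C)%nat) E)
    (F : nat -> Prop) (Fdec : forall fs, {affected F fs} + {~ affected F fs})
    (c1 c2 : nat) (Hc1 : (c1 < C)%nat) (Hc2 : (c2 < C)%nat) (Hc12 : c1 <> c2)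
    (g : R) (Hg : 0 < g) :
  let eta := ln g in
  forall (p1 p2 : splitvar) (l1 l2 : leafvar),
    (base_constraints E F p1 p2 l1 l2 /\ Gap E C c1 c2 eta l1 l2) <->
    (base_constraints E F p1 p2 l1 l2 /\ Gap E C c1 c2 eta l1 l2 /\
     Aff E F Fdec c1 c2 eta l1 l2).
Proof.
  intros eta p1 p2 l1 l2. split; [|tauto].
  intros [Hb Hgap]. split; [exact Hb|]. split; [exact Hgap|].
  destruct Hb as (H11 & H12 & Hb1 & Hb2 & H21 & H22 & H31 & H32 & H5).
  assert (Heq : forall i c' t, In (i, (c', t)) (indexed E) -> forall q v fs,
     In (q, v, fs) (leaves t) -> ~ affected F fs -> l1 i q = l2 i q).
  { intros i c' t Hi q v fs Hq Ha.
    rewrite (leaf_val E p1 l1 Hb1 H21 H31 i c' t Hi q v fs Hq).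
    rewrite (leaf_val E p2 l2 Hb2 H22 H32 i c' t Hi q v fs Hq).
    apply (path_eq p1 p2 t q v fs Hq). intros f tau Hf [p [y [n Hp]]].
    apply H5.
    - intro HF. apply Ha. exists f. auto.
    - exists c', t, p, y, n. split; [|exact Hp].
      unfold indexed in Hi. exact (in_combine_r _ _ _ _ Hi). }
  unfold Aff.
  rewrite (cs_diff E F Fdec c1 l1 l2 Heq).
  assert (Heq' : forall i c' t, In (i, (c', t)) (indexed E) -> forall q v fs,
     In (q, v, fs) (leaves t) -> ~ affected F fs -> l2 i q = l1 i q).
  { intros. symmetry. eapply Heq; eauto. }
  rewrite (cs_diff E F Fdec c2 l2 l1 Heq').
  destruct Hgap as [G1 G2].
  specialize (G1 c2 Hc2 (not_eq_sym Hc12)). specialize (G2 c1 Hc1 Hc12).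
  lra.
Qed.
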